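(* Let $N\ge1$, $\underline s=(s_1,\dots,s_N)\in\mathbb{Z}^N$, and complex $z_1,\dots,z_N$ with $|z_1|>1$, $|z_i|\ge1$. (i) Suppose $N\ge2$ and $2\le p\le N$; let $m_1=0$ and $m_2,\dots,m_p\ge0$, $j_1,\dots,j_p\ge0$ be integers. Let $\underline m^{(p)}=(m_1,\dots,m_p,j_p,0,\dots,0)\in\mathbb{N}^N$ if $p<N$ and $\underline m^{(N)}=(m_1,\dots,m_N)$; let $\underline j^{(p)}=(j_1,\dots,j_p,0,\dots,0)\in\mathbb{N}^N$. Let $\underline m'=(m_1,\dots,m_{p-1},j_{p-1},0,\dots,0)\in\mathbb{N}^N$ and $\underline j'=(j_1,\dots,j_{p-1},0,\dots,0)\in\mathbb{N}^N$. Then $$\mathrm{B}_N\!\left[\begin{smallmatrix}\underline s\\ \underline m^{(p)}\\ \underline j^{(p)}\end{smallmatrix}\Big|\underline z\right]=z_p^{j_p}\,\mathrm{B}_N\!\left[\begin{smallmatrix}\underline s\\ \underline m'\\ \underline j'\end{smallmatrix}\Big|\underline z\right]-z_p^{j_p}Q_{N,p}(j_p;z_p,\dots,z_N)\,\mathrm{B}_{p-1}\!\left[\begin{smallmatrix}s_1,\dots,s_{p-1}\\ m_1,\dots,m_{p-1}\\ j_1,\dots,j_{p-1}\end{smallmatrix}\Big|z_1,\dots,z_{p-1}\right]+\varepsilon_p\sum_{k=t_p+1}^{T_p}z_p^{j_p-k}R_{N,p}(k).$$ (ii) For every integer $j_1\ge0$, with modulations $(0,j_1,0,\dots,0)\in\mathbb{N}^N$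 (just $(0)$ if $N=1$) and shifts $(j_1,0,\dots,0)\in\mathbb{N}^N$, $$\mathrm{B}_N\!\left[\begin{smallmatrix}\underline s\\ (0,j_1,0,\dots,0)\\ (j_1,0,\dots,0)\end{smallmatrix}\Big|\underline z\right]=z_1^{j_1}\mathrm{La}_{s_1,\dots,s_N}(1/z_1,\dots,1/z_N)-z_1^{j_1}Q_{N,1}(j_1;z_1,\dots,z_N).$$
   Context: For $r\ge1$, $\underline s\in\mathbb{Z}^r$, $\underline m\in\mathbb{N}^r$ with $m_1=0$, $\underline j\in\mathbb{N}^r$ and complex $w_i$ ($|w_1|>1$, $|w_i|\ge1$): $\mathrm{B}_r\!\left[\begin{smallmatrix}\underline s\\ \underline m\\ \underline j\end{smallmatrix}\Big|\underline w\right]=\sum\frac{w_1^{-k_1}\cdots w_r^{-k_r}}{(k_1+j_1)^{s_1}\cdots(k_r+j_r)^{s_r}}$ over $k_1\ge1$, $1\le k_i\le k_{i-1}+m_i$ ($2\le i\le r$); $\mathrm{B}_0=1$. $\mathrm{La}_{s_1,\dots,s_N}(w_1,\dots,w_N)=\sum_{k_1\ge\cdots\ge k_N\ge1}\frac{w_1^{k_1}\cdots w_N^{k_N}}{k_1^{s_1}\cdots k_N^{s_N}}$. For $1\le p\le N$, $K\ge0$: $Q_{N,p}(K;z_p,\dots,z_N)=\sum_{K\ge k_p\ge\cdots\ge k_N\ge1}\prod_{i=p}^Nz_i^{-k_i}k_i^{-s_i}$ ($0$ if $K=0$), $Q_{N,N+1}=1$. $\varepsilon_{a,b}=1,-1,0$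 according as $a<b$, $a>b$, $a=b$; $\varepsilon_p=\varepsilon_{j_{p-1},j_p+m_p}$, $t_p=\min(j_{p-1},j_p+m_p)$, $T_p=\max(j_{p-1},j_p+m_p)$. For $K\ge0$: $R_{N,p}(K)=\sum\frac{z_1^{-k_1}\cdots z_{p-2}^{-k_{p-2}}(z_{p-1}z_p)^{-k_{p-1}}}{\big(\prod_{i=1}^{p-1}(k_i+j_i)^{s_i}\big)(k_{p-1}+K)^{s_p}}Q_{N,p+1}(k_{p-1}+K;z_{p+1},\dots,z_N)$ over $k_1\ge1$, $1\le k_i\le k_{i-1}+m_i$ ($2\le i\le p-1$); for $p=2$ the factor $z_1^{-k_1}\cdots z_{p-2}^{-k_{p-2}}$ is $1$. *)

(* Defs.v *)
From HB Require Import structures.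
From mathcomp Require Import all_boot all_order all_algebra complex.
From mathcomp Require Import all_classical all_reals all_analysis.
Set Implicit Arguments. Unset Strict Implicit. Unset Printing Implicit Defensive.
Import Order.TTheory GRing.Theory Num.Theory.
Import numFieldTopology.Exports numFieldNormedType.Exports.
Local Open Scope ring_scope.
Local Open Scope complex_scope.

(* Conventions: all finite families (s_i), (m_i), (j_i), (z_i) are given as
   functions on nat, indexed from 1 (index 0 and indices beyond the length
   are never used). *)

Definition cser (R : realType) (u : nat -> R[i]) : R[i] :=
  limn (fun n => (\sum_(1 <= k < n) u k : (R[i])^o)).

(* nested finite sums:
   nest n i kp bd t g =
     sum_{1 <= k_i <= bd i kp} t i k_i *
       sum_{1 <= k_{i+1} <= bd (i+1) k_i} t (i+1) k_{i+1} * ... (n levels) ...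
         * g k_{i+n-1}
   and nest 0 i kp bd t g = g kp. *)
Fixpoint nest (R : realType) (n i kp : nat) (bd : nat -> nat -> nat)
    (t : nat -> nat -> R[i]) (g : nat -> R[i]) : R[i] :=
  match n with
  | 0 => g kp
  | n'.+1 => \sum_(1 <= k < (bd i kp).+1) t i k * nest n' i.+1 k bd t g
  end.

(* full nested sum of depth r >= 1 with outermost index k_1 >= 1 unbounded;
   for r = 0 it is g 0 (only used with g = 1, giving B_0 = 1). *)
Definition nestser (R : realType) (r : nat) (bd : nat -> nat -> nat)
    (t : nat -> nat -> R[i]) (g : nat -> R[i]) : R[i] :=
  match r with
  | 0 => g 0%N
  | r'.+1 => cser (fun k => t 1%N k * nest r' 2 k bd t g)
  end.

Definition Bterm (R : realType) (s : nat -> int) (j : nat -> nat)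
    (w : nat -> R[i]) (i k : nat) : R[i] :=
  (w i ^+ k)^-1 / ((k + j i)%:R ^ s i).

(* B_r [ s ; m ; j | w ] : sum over k_1 >= 1, 1 <= k_i <= k_{i-1} + m_i *)
Definition B (R : realType) (r : nat) (s : nat -> int) (m j : nat -> nat)
    (w : nat -> R[i]) : R[i] :=
  nestser r (fun i kp => kp + m i)%N (Bterm s j w) (fun _ => 1).

(* La_{s_1..s_N}(w_1..w_N) = sum_{k_1 >= ... >= k_N >= 1} prod w_i^{k_i} / k_i^{s_i} *)
Definition La (R : realType) (N : nat) (s : nat -> int) (w : nat -> R[i]) : R[i] :=
  nestser N (fun _ kp => kp) (fun i k => w i ^+ k / (k%:R ^ s i)) (fun _ => 1).

(* Q_{N,p}(K; z_p..z_N) = sum_{K >= k_p >= ... >= k_N >= 1} prod z_i^{-k_i} k_i^{-s_i}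
   (= 0 if K = 0 and p <= N, and = 1 if p = N+1) *)
Definition Q (R : realType) (N p K : nat) (s : nat -> int) (z : nat -> R[i]) : R[i] :=
  nest (N.+1 - p) p K (fun _ kp => kp) (fun i k => (z i ^+ k)^-1 / (k%:R ^ s i))
    (fun _ => 1).

Definition RR (R : realType) (N p : nat) (s : nat -> int) (m j : nat -> nat)
    (z : nat -> R[i]) (K : nat) : R[i] :=
  nestser p.-1 (fun i kp => kp + m i)%N (Bterm s j z)
    (fun k => (z p ^+ k)^-1 / ((k + K)%:R ^ s p) * Q N p.+1 (k + K) s z).

Definition eps (R : realType) (a b : nat) : R[i] :=
  if (a < b)%N then 1 else if (b < a)%N then -1 else 0.

(* Main.v *)
Require Import Defs.
Set Implicit Arguments. Unset Strict Implicit. Unset Printing Implicit Defensive.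
From HB Require Import structures.
From mathcomp Require Import all_boot all_order all_algebra complex.
From mathcomp Require Import all_classical all_reals all_analysis.
From mathcomp Require Import ring lra zify.
Import Order.TTheory GRing.Theory Num.Theory.
Import numFieldTopology.Exports numFieldNormedType.Exports.
Local Open Scope ring_scope.
Local Open Scope complex_scope.
Local Open Scope classical_set_scope.
Definition hasSum (R : realType) (u : nat -> R[i]) (a : R[i]) :=
  (fun n => (\sum_(1 <= k < n) u k : (R[i])^o)) @ \oo --> (a : (R[i])^o).

Lemma cser_hasSum (R : realType) (u : nat -> R[i]) a : hasSum u a -> cser u = a.
Proof.
move=> h; rewrite /cser.
exact: (@cvg_lim _ (@norm_hausdorff R[i] (R[i]^o)) _ _ _ _ _ h).
Qed.

Lemma hasSumD (R : realType) (u v : nat -> R[i]) a b :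
  hasSum u a -> hasSum v b -> hasSum (fun k => u k + v k) (a + b).
Proof.
move=> hu hv; rewrite /hasSum.
have -> : (fun n => (\sum_(1 <= k < n) (u k + v k) : (R[i])^o)) =
  (fun n => (\sum_(1 <= k < n) u k : (R[i])^o)) + (fun n => \sum_(1 <= k < n) v k).
  by apply: funext => n; rewrite big_split.
exact: cvgD.
Qed.

Lemma hasSumZ (R : realType) (u : nat -> R[i]) a c :
  hasSum u a -> hasSum (fun k => c * u k) (c * a).
Proof.
move=> hu; rewrite /hasSum.
have -> : (fun n => (\sum_(1 <= k < n) (c * u k) : (R[i])^o)) =
  (fun n => c * (\sum_(1 <= k < n) u k : (R[i])^o)).
  by apply: funext => n; rewrite mulr_sumr.
exact: cvgMl_tmp.
Qed.

Lemma hasSum0 (R : realType) : hasSum (fun _ => 0 : R[i]) 0.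
Proof.
rewrite /hasSum.
have -> : (fun n => (\sum_(1 <= k < n) (0 : R[i]) : (R[i])^o)) = (fun _ => 0).
  by apply: funext => n; rewrite big1.
exact: cvg_cst.
Qed.

Lemma hasSum_ext (R : realType) (u v : nat -> R[i]) a :
  (forall k, u k = v k) -> hasSum u a -> hasSum v a.
Proof. by move=> e; have -> : u = v by apply: funext. Qed.

Lemma hasSum_sum (R : realType) (I : Type) (r : seq I) (f : I -> nat -> R[i]) (a : I -> R[i]) :
  (forall l, hasSum (f l) (a l)) ->
  hasSum (fun k => \sum_(l <- r) f l k) (\sum_(l <- r) a l).
Proof.
move=> h; elim: r => [|x r IH].
  rewrite big_nil; apply: hasSum_ext (@hasSum0 R) => k; by rewrite big_nil.
rewrite big_cons; apply: hasSum_ext (hasSumD (h x) IH) => k; by rewrite big_cons.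
Qed.

Lemma hasSum_shift (R : realType) (v : nat -> R[i]) a j :
  hasSum v a -> hasSum (fun k => v (k + j)%N) (a - \sum_(1 <= k < j.+1) v k).
Proof.
rewrite /hasSum => h; rewrite -cvg_shiftS /=.
have E : forall n, \sum_(1 <= k < n.+1) v (k + j)%N =
   \sum_(1 <= k < (n + j).+1) v k - \sum_(1 <= k < j.+1) v k.
  move=> n; rewrite (@big_cat_nat _ _ _ j.+1 1 (n + j).+1) //=; last by rewrite ltnS leq_addl.
  rewrite addrC addrK.
  have -> : j.+1 = (1 + j)%N by rewrite add1n.
  by rewrite big_addn; congr (\sum_(1 <= i < _) _); rewrite -addSn addnK.
under eq_fun do rewrite E.
apply: cvgB; last exact: cvg_cst.
have := h; rewrite -(cvg_shiftn j.+1) /=.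
by under eq_fun do rewrite addnS.
Qed.
Lemma real_series_cvg (R : realType) (f : nat -> R) (A q : R) :
  0 <= q < 1 -> (forall k, `|f k| <= A * q ^+ k) -> cvgn (series (f : nat -> R^o)).
Proof.
move=> /andP[q0 q1] hf.
have A0 : 0 <= A by have := hf 0%N; rewrite expr0 mulr1; apply: le_trans.
apply: (@normed_cvg R (R^o)).
have := @series_le_cvg R (fun n => `|f n|) (geometric A q).
apply.
- by move=> n.
- by move=> n; rewrite /geometric /= mulr_ge0 // exprn_ge0.
- by move=> n; exact: hf.
- by apply: is_cvg_geometric_series; rewrite ger0_norm.
Qed.

Lemma normC_real (R : realType) (x : R) : `|x%:C| = `|x|%:C :> R[i].
Proof.
by rewrite normc_def /= expr0n /= addr0 sqrtr_sqr.
Qed.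

Lemma cvgC (R : realType) (f : nat -> R) (l : R) :
  (f : nat -> R^o) @ \oo --> (l : R^o) ->
  (fun n => (f n)%:C : (R[i])^o) @ \oo --> ((l%:C : R[i]) : (R[i])^o).
Proof.
move=> h; have {}h := iffLR (@cvgrPdist_lt _ (R^o) _ _ _ f l) h.
apply/(@cvgrPdist_lt _ (R[i]^o)) => e e0.
move: (e0); rewrite ltcE /= => /andP[/eqP Ie Re0].
have -> : e = (complex.Re e)%:C by case: e e0 Ie Re0 => a b /= _ ->.
have hh : \forall t \near \oo, `|l - f t| < complex.Re e.
  by apply: h => //; apply: eventually_filter.
apply: filterS hh => n hn.
by rewrite -rmorphB normC_real ltcR.
Qed.
Lemma hasSum_bound (R : realType) (u : nat -> R[i]) (A q : R) :
  0 <= q < 1 -> (forall k, `|u k| <= (A * q ^+ k)%:C) -> exists a, hasSum u a.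
Proof.
move=> hq hu.
have hre : forall k, `|complex.Re (u k)| <= A * q ^+ k.
  by move=> k; rewrite -lecR; apply: le_trans (normc_ge_Re _) (hu k).
have him : forall k, `|complex.Im (u k)| <= A * q ^+ k.
  move=> k; rewrite -lecR; apply: le_trans (hu k).
  have -> : complex.Im (u k) = - complex.Re (u k * 'i%C) by rewrite ReiNIm opprK.
  rewrite normrN; apply: le_trans (normc_ge_Re _) _.
  by case: (u k) => a b; rewrite !normc_def /= !mulr0 !mulr1 sub0r addr0 sqrrN addrC.
have [lr Hr] : exists lr, (series (fun k => complex.Re (u k)) : nat -> R^o) @ \oo --> (lr : R^o).
  by exists (limn (series (fun k => complex.Re (u k)) : nat -> R^o)); apply: real_series_cvg hre.
have [li Hi] : exists li, (series (fun k => complex.Im (u k)) : nat -> R^o) @ \oo --> (li : R^o).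
  by exists (limn (series (fun k => complex.Im (u k)) : nat -> R^o)); apply: real_series_cvg him.
exists (lr%:C + 'i%C * li%:C - u 0%N).
rewrite /hasSum -cvg_shiftS /=.
have E : forall n, \sum_(1 <= k < n.+1) u k =
   (series (fun k => complex.Re (u k)) n.+1)%:C + 'i%C * (series (fun k => complex.Im (u k)) n.+1)%:C - u 0%N.
  move=> n; rewrite /series /= !rmorph_sum mulr_sumr -big_split /=.
  rewrite [in RHS]big_nat_recl // [in RHS]/= -complexE (addrC (u 0%N)) addrK.
  by rewrite big_add1 /=; apply: eq_bigr => k _; rewrite -complexE.
under eq_fun do rewrite E.
apply: cvgB; last exact: cvg_cst.
apply: cvgD; first by apply: (cvgC (f := fun n => series (fun k => complex.Re (u k)) n.+1)); rewrite cvg_shiftS.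
apply: cvgMl_tmp.
by apply: (cvgC (f := fun n => series (fun k => complex.Im (u k)) n.+1)); rewrite cvg_shiftS.
Qed.
Lemma pow_le2 (R : realType) (x : R) n : 0 <= x <= 1 -> (1 + x) ^+ n <= 1 + ((2 ^ n)%:R - 1) * x.
Proof.
move=> /andP[x0 x1]; elim: n => [|n IH]; first by rewrite expr0 expn0 subrr mul0r addr0.
rewrite exprS expnS natrM.
have T1 : 1 <= (2 ^ n)%:R :> R by rewrite ler1n expn_gt0.
have P0 : 0 <= (1 + x) ^+ n by rewrite exprn_ge0 // addr_ge0.
move: IH T1 P0; set T := (2 ^ n)%:R; set P := (1 + x) ^+ n => IH T1 P0.
have H : (1 + x) * P <= (1 + x) * (1 + (T - 1) * x) by rewrite ler_wpM2l // addr_ge0.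
apply: le_trans H _.
have H2 : 0 <= (T - 1) * (x * (1 - x)) by rewrite mulr_ge0 ?subr_ge0 // mulr_ge0 // subr_ge0.
have -> : (2%:R : R) = 1 + 1 by [].
nra.
Qed.

Lemma bern (R : realType) (e : R) k : 0 <= e -> 1 + k%:R * e <= (1 + e) ^+ k.
Proof.
move=> e0; elim: k => [|k IH]; first by rewrite mul0r addr0 expr0.
rewrite exprS -natr1.
have K0 : 0 <= k%:R :> R by [].
move: IH K0; set P := (1 + e) ^+ k; set K := k%:R => IH K0.
have H : (1 + e) * (1 + K * e) <= (1 + e) * P by rewrite ler_wpM2l // addr_ge0.
apply: le_trans H; nra.
Qed.

Lemma poly_geo (R : realType) (r : R) (c D : nat) : 1 < r ->
  exists A q : R, 0 <= q < 1 /\ forall k, ((k + c).+1 ^ D)%:R / r ^+ k <= A * q ^+ k.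
Proof.
move=> r1; set d := D.+1.
pose del := Num.min 1 (r - 1).
have del0 : 0 < del by rewrite lt_min ltr01 subr_gt0.
have del1 : del <= 1 by rewrite ge_min lexx.
have delr : del <= r - 1 by rewrite ge_min lexx orbT.
pose T := (2 ^ d)%:R : R.
have T1 : 1 <= T by rewrite ler1n expn_gt0.
pose e := del / T.
have eT : e * T = del by rewrite /e mulfVK // gt_eqF // (lt_le_trans ltr01).
have e0 : 0 < e by rewrite divr_gt0 // (lt_le_trans ltr01).
have e1 : e <= 1.
  by apply: le_trans del1; rewrite -eT ler_peMr // ltW.
pose rho := 1 + e.
have rho1 : 1 < rho by rewrite /rho ltrDl.
have hrho : rho ^+ d <= r.
  apply: le_trans (pow_le2 d _) _; first by rewrite ltW.
  rewrite -/T; nra.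
pose Bc := (c.+1)%:R / e.
have Bce : Bc * e = (c.+1)%:R by rewrite /Bc mulfVK // gt_eqF.
have Bc0 : 0 <= Bc by rewrite divr_ge0 // ltW.
have hk : forall k, ((k + c).+1)%:R <= Bc * rho ^+ k.
  move=> k; have hb := bern k (ltW e0).
  rewrite -/rho in hb.
  have K0 : 0 <= k%:R :> R by [].
  have C0 : 0 <= c%:R :> R by [].
  have -> : ((k + c).+1)%:R = k%:R + c%:R + 1 :> R by rewrite -natrD -natr1.
  have Bce' : Bc * e = c%:R + 1 by rewrite Bce -natr1.
  move: hb K0 C0 Bce'.
  set K := k%:R; set C := c%:R; set X := rho ^+ k => hb K0 C0 Bce2.
  nra.
exists (Bc ^+ D), rho^-1; split.
  by rewrite invr_ge0 ltW ?invf_lt1 //= (lt_trans ltr01).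
move=> k.
have X0 : 0 < rho ^+ k by rewrite exprn_gt0 // (lt_trans ltr01).
apply: (@le_trans _ _ ((Bc * rho ^+ k) ^+ D / (rho ^+ d) ^+ k)).
  apply: ler_pM.
  - by [].
  - by rewrite invr_ge0 ltW // exprn_gt0 // (lt_trans ltr01).
  - by rewrite natrX; apply: lerXn2r => //; rewrite ?nnegrE // mulr_ge0 // ltW.
  - have rho0 : 0 < rho by rewrite (lt_trans ltr01).
    have r0 : 0 < r by rewrite (lt_trans ltr01).
    rewrite lef_pV2 ?posrE ?exprn_gt0 //; apply: lerXn2r => //.
    by rewrite nnegrE exprn_ge0 // ltW.
    by rewrite nnegrE ltW.
rewrite -exprM mulnC exprM exprVn.
move: X0; set X := rho ^+ k => X0.
rewrite /d exprS exprMn.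
have XD : X ^+ D != 0 by rewrite expf_neq0 // gt_eqF.
by rewrite [X * _]mulrC invfM mulrA mulfK.
Qed.
Lemma nest_comp (R : realType) a b i kp bd (t : nat -> nat -> R[i]) g :
  nest (a + b) i kp bd t g = nest a i kp bd t (fun k => nest b (i + a) k bd t g).
Proof.
elim: a i kp => [|a IH] i kp; first by rewrite add0n addn0.
rewrite addSn /=; apply: eq_bigr => k _; by rewrite IH addSnnS.
Qed.

Lemma nest_ext (R : realType) n i kp bd bd' (t t' : nat -> nat -> R[i]) g g' :
  (forall i' k, (i <= i' < i + n)%N -> bd i' k = bd' i' k) ->
  (forall i' k, (i <= i' < i + n)%N -> t i' k = t' i' k) ->
  (forall k, g k = g' k) ->
  nest n i kp bd t g = nest n i kp bd' t' g'.
Proof.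
elim: n i kp => [|n IH] i kp hb ht hg /=; first exact: hg.
rewrite hb; last by rewrite leqnn addnS ltnS leq_addr.
apply: eq_bigr => k _; rewrite ht; last by rewrite leqnn addnS ltnS leq_addr.
congr (_ * _); apply: IH => // i' k' /andP[h1 h2].
- by apply: hb; rewrite (ltnW h1) /= addnS -addSn.
- by apply: ht; rewrite (ltnW h1) /= addnS -addSn.
Qed.

Lemma nest_extg (R : realType) n i kp bd (t : nat -> nat -> R[i]) g g' :
  (forall k, g k = g' k) -> nest n i kp bd t g = nest n i kp bd t g'.
Proof. by move=> h; apply: nest_ext. Qed.

Lemma nestD (R : realType) n i kp bd (t : nat -> nat -> R[i]) g1 g2 :
  nest n i kp bd t (fun k => g1 k + g2 k) = nest n i kp bd t g1 + nest n i kp bd t g2.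
Proof.
elim: n i kp => [|n IH] i kp //=.
by rewrite -big_split; apply: eq_bigr => k _; rewrite IH mulrDr.
Qed.

Lemma nestZ (R : realType) n i kp bd (t : nat -> nat -> R[i]) c g :
  nest n i kp bd t (fun k => c * g k) = c * nest n i kp bd t g.
Proof.
elim: n i kp => [|n IH] i kp //=.
by rewrite mulr_sumr; apply: eq_bigr => k _; rewrite IH mulrCA.
Qed.

Lemma nest0 (R : realType) n i kp bd (t : nat -> nat -> R[i]) :
  nest n i kp bd t (fun _ => 0) = 0.
Proof.
elim: n i kp => [|n IH] i kp //=.
by rewrite big1 // => k _; rewrite IH mulr0.
Qed.

Lemma nest_sum (R : realType) (I : Type) (r : seq I) n i kp bd (t : nat -> nat -> R[i]) (f : I -> nat -> R[i]) :
  nest n i kp bd t (fun k => \sum_(l <- r) f l k) = \sum_(l <- r) nest n i kp bd t (f l).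
Proof.
elim: r => [|x r IH].
  have -> : (fun k => \sum_(l <- [::]) f l k) = (fun _ => 0) by apply: funext => k; rewrite big_nil.
  by rewrite nest0 big_nil.
rewrite big_cons -IH -nestD; apply: nest_extg => k; by rewrite big_cons.
Qed.

Lemma leq_pow a b e : (a <= b)%N -> (a ^ e <= b ^ e)%N.
Proof. by move=> h; elim: e => // e IH; rewrite !expnS leq_mul. Qed.

Lemma inv_pow_bound (R : realType) (n : nat) (e : int) :
  `|((n%:R : R[i]) ^ e)^-1| <= ((n.+1) ^ `|e|%N)%:R.
Proof.
case: e => a.
- have h1 : 1 <= ((n.+1) ^ `|Posz a|%N)%:R :> R[i] by rewrite ler1n expn_gt0.
  apply: le_trans h1; rewrite /= normfV -exprnP.
  case: n => [|n].
    by case: a => [|a]; rewrite ?expr0 ?normr1 ?invr1 // expr0n /= normr0 invr0 ler01.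
  rewrite invf_le1 ?normrX ?exprn_ege1 ?exprn_gt0 //.
  + by rewrite normr_nat ler1n.
  + by rewrite normr_gt0 pnatr_eq0.
- rewrite NegzE -exprnN invrK /= normrX normr_nat -natrX ler_nat.
  by apply: leq_pow.
Qed.

Lemma term_bound1 (R : realType) (w : R[i]) k n e :
  `|(w ^+ k)^-1 / (n%:R ^ e)| <= (`|w| ^+ k)^-1 * ((n.+1) ^ `|e|%N)%:R.
Proof.
by rewrite normrM normfV normrX ler_wpM2l ?inv_pow_bound // invr_ge0 exprn_ge0.
Qed.

Lemma term_bound (R : realType) (w : R[i]) k n e : 1 <= `|w| ->
  `|(w ^+ k)^-1 / (n%:R ^ e)| <= ((n.+1) ^ `|e|%N)%:R.
Proof.
move=> w1; apply: le_trans (term_bound1 _ _ _ _) _.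
rewrite ler_piMl //; first by rewrite invf_le1 ?exprn_ege1 ?exprn_gt0 // (lt_le_trans ltr01).
Qed.
Lemma nest_bound (R : realType) n i kp bd (t : nat -> nat -> R[i]) g (M : nat) (F G : nat -> nat) :
  {homo F : a b / (a <= b)%N} -> {homo G : a b / (a <= b)%N} ->
  (forall i' k, (i <= i' < i + n)%N -> (bd i' k <= k + M)%N) ->
  (forall i' k, (i <= i' < i + n)%N -> `|t i' k| <= (F k)%:R) ->
  (forall k, `|g k| <= (G k)%:R) ->
  `|nest n i kp bd t g| <= ((((kp + n * M) * F (kp + n * M)) ^ n * G (kp + n * M))%:R).
Proof.
move=> hF hG; elim: n i kp => [|n IH] i kp hb ht hg /=.
  rewrite expn0 mul1n; apply: le_trans (hg kp) _; rewrite ler_nat; apply: hG; exact: leq_addr.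
set L := (kp + n.+1 * M)%N.
have hi : (i <= i < i + n.+1)%N by rewrite leqnn addnS ltnS leq_addr.
have kpL : (kp + M <= L)%N by rewrite leq_add2l leq_pmull.
have bdL : (bd i kp <= L)%N by apply: leq_trans (hb i kp hi) kpL.
apply: le_trans (ler_norm_sum _ _ _) _.
apply: le_trans (@ler_sum_nat _ _ _ _ (fun _ => ((F L * ((L * F L) ^ n * G L))%:R)) _) _.
  move=> k /andP[k1 kb].
  have kM : (k <= kp + M)%N by apply: leq_trans (hb i kp hi); rewrite -ltnS.
  rewrite normrM natrM; apply: ler_pM => //.
    by apply: le_trans (ht i k hi) _; rewrite ler_nat; apply: hF; apply: leq_trans kM kpL.
  have h1 : forall i' k', (i.+1 <= i' < i.+1 + n)%N -> (bd i' k' <= k' + M)%N.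
    by move=> i' k' /andP[a1 a2]; apply: hb; rewrite (ltnW a1) /= addnS -addSn.
  have h2 : forall i' k', (i.+1 <= i' < i.+1 + n)%N -> `|t i' k'| <= (F k')%:R.
    by move=> i' k' /andP[a1 a2]; apply: ht; rewrite (ltnW a1) /= addnS -addSn.
  apply: le_trans (IH i.+1 k h1 h2 hg) _; rewrite ler_nat.
  have kL : (k + n * M <= L)%N by rewrite /L mulSn addnA leq_add2r.
  by apply: leq_mul; [apply: leq_pow; apply: leq_mul => //; apply: hF | apply: hG].
rewrite sumr_const_nat subn1 /= -mulrnA ler_nat -/L.
apply: leq_trans (leq_mul (leqnn _) bdL) _.
by rewrite expnS; apply: eq_leq; ring.
Qed.

Definition polyb (P : nat -> nat) := exists c D, forall k, (P k <= (k + c).+1 ^ D)%N.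

Lemma polyb_const a : polyb (fun _ => a).
Proof. by exists a, 1%N => k; rewrite expn1 leqW // leq_addl. Qed.

Lemma polyb_id : polyb (fun k => k).
Proof. by exists 0%N, 1%N => k; rewrite expn1 addn0. Qed.

Lemma polyb_le (P P' : nat -> nat) : (forall k, (P k <= P' k)%N) -> polyb P' -> polyb P.
Proof. by move=> h [c [D hc]]; exists c, D => k; apply: leq_trans (h k) (hc k). Qed.

Lemma polyb_mul P P' : polyb P -> polyb P' -> polyb (fun k => P k * P' k)%N.
Proof.
move=> [c [D h]] [c' [D' h']]; exists (c + c')%N, (D + D')%N => k.
rewrite expnD; apply: leq_mul.
  by apply: leq_trans (h k) _; apply: leq_pow; lia.
by apply: leq_trans (h' k) _; apply: leq_pow; lia.
Qed.

Lemma polyb_exp P n : polyb P -> polyb (fun k => P k ^ n)%N.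
Proof.
move=> [c [D h]]; exists c, (D * n)%N => k.
by rewrite expnM; apply: leq_pow.
Qed.

Lemma polyb_shift P a : polyb P -> polyb (fun k => P (k + a))%N.
Proof. by move=> [c [D h]]; exists (a + c)%N, D => k; rewrite addnA. Qed.
Lemma le_sum_ord (f : nat -> nat) n i : (i < n)%N -> (f i <= \sum_(i0 < n) f i0)%N.
Proof. by move=> hi; rewrite (bigD1 (Ordinal hi)) //= leq_addr. Qed.

Lemma normr_realC (R : realType) (w : R[i]) : `|w| = (complex.Re `|w|)%:C.
Proof.
have := ger0_Im (normr_ge0 w).
by case: `|w| => a b /= ->.
Qed.

Lemma summable_B (R : realType) n (s : nat -> int) (m j : nat -> nat) (z : nat -> R[i]) g (G : nat -> nat) :
  1 < `|z 1%N| -> (forall i, (2 <= i <= n.+1)%N -> 1 <= `|z i|) ->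
  {homo G : a b / (a <= b)%N} -> polyb G -> (forall k, `|g k| <= (G k)%:R) ->
  exists a, hasSum (fun k => Bterm s j z 1 k * nest n 2 k (fun i kp => (kp + m i)%N) (Bterm s j z) g) a.
Proof.
move=> z1 zi hG pG hg.
set M := \sum_(i < n.+2) m i.
set J := \sum_(i < n.+2) j i.
set S := \sum_(i < n.+2) `|s i|%N.
pose F := fun k => ((k + J).+1 ^ S)%N.
have hF : {homo F : a b / (a <= b)%N}.
  by move=> a b hab; apply: leq_pow; rewrite ltnS leq_add2r.
have zi' : forall i, (1 <= i <= n.+1)%N -> 1 <= `|z i|.
  move=> i /andP[]; rewrite leq_eqVlt => /orP[/eqP <- _|h1 h2]; first exact: ltW.
  by apply: zi; rewrite h1.
have tb : forall i k, (1 <= i <= n.+1)%N -> `|Bterm s j z i k| <= (F k)%:R.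
  move=> i k hi; rewrite /Bterm; apply: le_trans (term_bound _ _ _ (zi' i hi)) _; rewrite ler_nat.
  have hi2 : (i < n.+2)%N by case/andP: hi.
  apply: leq_trans (leq_pow _ _) (leq_pexp2l _ _) => //.
  - by have := le_sum_ord j hi2; rewrite -/J; lia.
  - by apply: (@le_sum_ord (fun i => `|s i|%N)).
have nb : forall kp, `|nest n 2 kp (fun i kp => (kp + m i)%N) (Bterm s j z) g| <=
    ((((kp + n * M) * F (kp + n * M)) ^ n * G (kp + n * M))%:R).
  move=> kp; apply: nest_bound => //.
  - by move=> i' k /andP[h1 h2]; rewrite leq_add2l; apply: le_sum_ord; lia.
  - by move=> i' k /andP[h1 h2]; apply: tb; apply/andP; split; lia.
pose P := fun k => (F k * (((k + n * M) * F (k + n * M)) ^ n * G (k + n * M)))%N.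
have pF : polyb F by exists J, S.
have pP : polyb P.
  apply: polyb_mul => //.
  have := polyb_shift (n * M) (polyb_mul (polyb_exp n (polyb_mul polyb_id pF)) pG).
  by apply: polyb_le => k.
have [c [D hP]] := pP.
set r := complex.Re `|z 1%N|.
have zr : `|z 1%N| = r%:C by rewrite /r -normr_realC.
have r1 : 1 < r by rewrite -ltcR -zr.
have r0 : 0 < r by apply: lt_trans r1.
have [A [q [hq hAq]]] := poly_geo c D r1.
apply: (@hasSum_bound _ _ A q) => // k.
apply: (@le_trans _ _ (((P k)%:R / r ^+ k)%:C)).
  have -> : ((P k)%:R / r ^+ k)%:C = (`|z 1%N| ^+ k)^-1 * (F k)%:R * (((k + n * M) * F (k + n * M)) ^ n * G (k + n * M))%:R.
    rewrite zr rmorphM fmorphV rmorphXn rmorph_nat /P natrM.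
    by rewrite mulrC mulrA.
  rewrite normrM; apply: ler_pM => //.
  apply: le_trans (term_bound1 _ _ _ _) _.
  apply: ler_wpM2l; first by rewrite invr_ge0 exprn_ge0.
  rewrite ler_nat; apply: leq_trans (leq_pow _ _) (leq_pexp2l _ _) => //.
  - by have := @le_sum_ord j n.+2 1 isT; rewrite -/J; lia.
  - by apply: (@le_sum_ord (fun i => `|s i|%N) n.+2 1).
rewrite lecR; apply: le_trans (hAq k).
rewrite ler_wpM2r ?ler_nat //; rewrite invr_ge0 exprn_ge0 // ltW //.
Qed.
Lemma sum_shiftH (R : realType) (h : nat -> R[i]) c lo hi : (lo <= hi)%N ->
  \sum_(lo.+1 <= K < hi.+1) h (c + K)%N =
  \sum_(1 <= k < (c + hi).+1) h k - \sum_(1 <= k < (c + lo).+1) h k.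
Proof.
move=> hl.
rewrite (@big_cat_nat _ _ _ (c + lo).+1 1 (c + hi).+1) //=; last by rewrite ltnS leq_add2l.
rewrite addrC addrK.
have -> : (c + lo).+1 = (lo.+1 + c)%N by rewrite addnC addSn.
rewrite big_addn.
have -> : ((c + hi).+1 - c = hi.+1)%N by lia.
by apply: eq_bigr => k _; rewrite addnC.
Qed.

Lemma core_id (R : realType) (h : nat -> R[i]) (Z : R[i]) kq m j j' :
  Z * (\sum_(1 <= k < (kq + m).+1) h (k + j)%N) =
  Z * (\sum_(1 <= k < (kq + j').+1) h k) - Z * (\sum_(1 <= k < j.+1) h k) * 1
  + eps R j' (j + m) * \sum_((minn j' (j + m)).+1 <= K < (maxn j' (j + m)).+1) Z * h (kq + K)%N.
Proof.
rewrite -mulr_sumr.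
have E1 : \sum_(1 <= k < (kq + m).+1) h (k + j)%N =
    \sum_(1 <= k < (j + (kq + m)).+1) h k - \sum_(1 <= k < j.+1) h k.
  have := @sum_shiftH R h j 0 (kq + m) (leq0n _).
  rewrite addn0 => <-; by apply: eq_bigr => k _; rewrite addnC.
rewrite E1.
have -> : (j + (kq + m) = kq + (j + m))%N by lia.
rewrite /eps; case: ltngtP => H.
- rewrite sum_shiftH ?(ltnW H) //.
  ring.
- rewrite sum_shiftH ?(ltnW H) //.
  ring.
- rewrite H; ring.
Qed.
Lemma nest_top (R : realType) n i k K bd bd' (t t' : nat -> nat -> R[i]) (c : R[i]) :
  ((0 < n)%N -> bd i k = bd' i K) ->
  (forall i' k, (i < i' < i + n)%N -> bd i' k = bd' i' k) ->
  (forall i' k, (i <= i' < i + n)%N -> t i' k = t' i' k) ->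
  nest n i k bd t (fun _ => c) = nest n i K bd' t' (fun _ => c).
Proof.
case: n => [|n] //= hb hbd ht.
rewrite hb //; apply: eq_bigr => k' _.
rewrite ht; last by rewrite leqnn addnS ltnS leq_addr.
congr (_ * _); apply: nest_ext => // i' k'' /andP[h1 h2].
- by apply: hbd; rewrite h1 addnS -addSn.
- by apply: ht; rewrite (ltnW h1) addnS -addSn.
Qed.

Definition tQ (R : realType) (s : nat -> int) (z : nat -> R[i]) (i k : nat) : R[i] :=
  (z i ^+ k)^-1 / (k%:R ^ s i).

Lemma tQ_bound (R : realType) s (z : nat -> R[i]) i k : 1 <= `|z i| ->
  `|tQ s z i k| <= ((k.+1) ^ `|s i|%N)%:R.
Proof. by move=> h; apply: term_bound. Qed.

Lemma partii (R : realType) (n : nat) s (z : nat -> R[i]) (j1 : nat) :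
  1 < `|z 1%N| -> (forall i, (1 <= i <= n.+1)%N -> 1 <= `|z i|) ->
  B n.+1 s (fun i => if i == 2%N then j1 else 0%N) (fun i => if i == 1%N then j1 else 0%N) z =
       z 1%N ^+ j1 * La n.+1 s (fun i => (z i)^-1) - z 1%N ^+ j1 * Q n.+1 1 j1 s z.
Proof.
move=> z1 zi.
have z10 : z 1%N != 0 by rewrite -normr_gt0 (lt_trans ltr01).
pose v := fun K => tQ s z 1 K * nest n 2 K (fun _ kp => kp) (tQ s z) (fun _ => 1).
have hLa : La n.+1 s (fun i => (z i)^-1) = cser v.
  rewrite /La /nestser /v.
  have -> : (fun i k => (z i)^-1 ^+ k / (k%:R ^ s i)) = tQ s z.
    by apply: funext => i; apply: funext => k; rewrite /tQ exprVn.
  by congr cser; apply: funext => k; rewrite /tQ exprVn.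
have hQ : Q n.+1 1 j1 s z = \sum_(1 <= k < j1.+1) v k.
  by rewrite /Q subSS subn0.
have [a ha] : exists a, hasSum v a.
  have [a ha] := @summable_B R n s (fun _ => 0%N) (fun _ => 0%N) z (fun _ => 1) (fun _ => 1%N)
    z1 (fun i hi => zi i (ltac:(by case/andP: hi => h1 h2; rewrite h2 ltnW))) (fun _ _ _ => leqnn _) (polyb_const 1)
    (fun k => ltac:(by rewrite normr1)).
  exists a; apply: hasSum_ext ha => k.
  rewrite /v /Bterm /tQ addn0; congr (_ * _).
  apply: nest_ext => // i' k' _; by rewrite addn0.
have hS := hasSumZ (c := z 1%N ^+ j1) (hasSum_shift (j := j1) ha).
rewrite hLa (cser_hasSum ha) hQ -mulrBr -(cser_hasSum hS).
rewrite /B /nestser; congr cser; apply: funext => k.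
rewrite /v mulrA; congr (_ * _).
- rewrite /Bterm /tQ /= exprD invfM mulrA mulrA [z 1%N ^+ j1 * _]mulrC mulrK //.
  by rewrite unitfE expf_neq0.
- apply: (@nest_top R n 2 k (k + j1) _ _ _ _ 1) => //.
  + by move=> i' k' /andP[h1 _]; rewrite (gtn_eqF h1) addn0.
  + by move=> i' k' /andP[h1 _]; rewrite /Bterm /tQ (gtn_eqF h1) addn0.
Qed.
Lemma pre_eq (R : realType) a b k s (z : nat -> R[i]) (m1 j1 m2 j2 : nat -> nat) (g : nat -> R[i]) :
  j1 1%N = j2 1%N -> (forall i, (2 <= i <= a.+1)%N -> m1 i = m2 i /\ j1 i = j2 i) ->
  Bterm s j1 z 1 k * nest (a + b) 2 k (fun i kp => (kp + m1 i)%N) (Bterm s j1 z) g =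
  Bterm s j2 z 1 k * nest a 2 k (fun i kp => (kp + m2 i)%N) (Bterm s j2 z)
     (fun kq => nest b a.+2 kq (fun i kp => (kp + m1 i)%N) (Bterm s j1 z) g).
Proof.
move=> h1 h2; rewrite /Bterm h1 nest_comp; congr (_ * _).
apply: nest_ext => //.
- move=> i' k' /andP[a1 a2].
  by have [-> _] : m1 i' = m2 i' /\ j1 i' = j2 i' by apply: h2; rewrite a1 /=; lia.
- move=> i' k' /andP[a1 a2].
  by have [_ ->] : m1 i' = m2 i' /\ j1 i' = j2 i' by apply: h2; rewrite a1 /=; lia.
Qed.

Lemma nest_lin3 (R : realType) n i kp bd (t : nat -> nat -> R[i]) (c1 c2 c3 : R[i])
   (g1 g2 : nat -> R[i]) (r : seq nat) (d : nat -> R[i]) (f : nat -> nat -> R[i]) :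
  nest n i kp bd t (fun k => c1 * g1 k + c2 * g2 k + c3 * \sum_(l <- r) d l * f l k) =
  c1 * nest n i kp bd t g1 + c2 * nest n i kp bd t g2 +
  c3 * \sum_(l <- r) d l * nest n i kp bd t (f l).
Proof.
rewrite nestD nestD !nestZ; congr (_ + _ * _).
rewrite (nest_sum r n i kp bd t (fun l k => d l * f l k)).
by apply: eq_bigr => l _; rewrite nestZ.
Qed.
Lemma parti (R : realType) (a b : nat) s (z : nat -> R[i]) (m j : nat -> nat) :
  1 < `|z 1%N| -> (forall i, (1 <= i <= (a + b.+1).+1)%N -> 1 <= `|z i|) ->
  let mp := fun i => if (i <= a.+2)%N then m i
                     else if i == (a.+2).+1 then j a.+2 else 0%N in
  let jp := fun i => if (i <= a.+2)%N then j i else 0%N in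
  let m' := fun i => if (i <= (a.+2).-1)%N then m i
                     else if i == a.+2 then j (a.+2).-1 else 0%N in
  let j' := fun i => if (i <= (a.+2).-1)%N then j i else 0%N in
  B (a + b.+1).+1 s mp jp z =
    z a.+2 ^+ j a.+2 * B (a + b.+1).+1 s m' j' z
    - z a.+2 ^+ j a.+2 * Q (a + b.+1).+1 a.+2 (j a.+2) s z * B (a.+2).-1 s m j z
    + eps R (j (a.+2).-1) (j a.+2 + m a.+2)%N *
        \sum_((minn (j (a.+2).-1) (j a.+2 + m a.+2)).+1 <= k < (maxn (j (a.+2).-1) (j a.+2 + m a.+2)).+1)
           z a.+2 ^ ((j a.+2)%:Z - k%:Z) * RR (a + b.+1).+1 a.+2 s m j z k.
Proof.
intros z1 zi mp jp m' j'.
have zp1 : 1 <= `|z a.+2| by apply: zi; lia.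
have zp0 : z a.+2 != 0 by rewrite -normr_gt0 (lt_le_trans ltr01).
set bdm := fun i kp => (kp + m i)%N.
set tj := Bterm s j z.
pose h := fun K => tQ s z a.+2 K * Q (a + b.+1).+1 a.+3 K s z.
have hQf : forall K, Q (a + b.+1).+1 a.+3 K s z = nest b a.+3 K (fun _ kp => kp) (tQ s z) (fun _ => 1).
  by move=> K; rewrite /Q; have -> : ((a + b.+1).+2 - a.+3 = b)%N by lia.
have hQp : Q (a + b.+1).+1 a.+2 (j a.+2) s z = \sum_(1 <= K < (j a.+2).+1) h K.
  rewrite /Q; have -> : ((a + b.+1).+2 - a.+2 = b.+1)%N by lia.
  by rewrite /=; apply: eq_bigr => K _; rewrite /h hQf.
pose LG := fun kq => nest b.+1 a.+2 kq (fun i kp => (kp + mp i)%N) (Bterm s jp z) (fun _ => 1).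
have hLG : forall kq, LG kq = z a.+2 ^+ j a.+2 * \sum_(1 <= k < (kq + m a.+2).+1) h (k + j a.+2)%N.
  move=> kq; rewrite /LG /= /mp leqnn mulr_sumr; apply: eq_bigr => k _.
  rewrite /h hQf /Bterm /jp leqnn.
  rewrite (@nest_top R b a.+3 k (k + j a.+2)%N _ (fun _ kp => kp) _ (tQ s z) 1).
  - rewrite /tQ exprD invfM.
    set zk := z a.+2 ^+ k; set zj := z a.+2 ^+ j a.+2.
    have zk0 : zk != 0 by rewrite expf_neq0.
    have zj0 : zj != 0 by rewrite expf_neq0.
    set X := (_ ^ s a.+2)^-1; set Y := nest _ _ _ _ _ _.
    by rewrite [zk^-1 / zj]mulrC -!mulrA mulVKf.
  - by move=> _; rewrite ltnn eqxx.
  - move=> i' k' /andP[h1 _]; rewrite /mp.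
    by rewrite leqNgt (ltn_trans _ h1) //= (gtn_eqF h1) addn0.
  - move=> i' k' /andP[h1 _]; rewrite /Bterm /tQ /jp.
    by rewrite leqNgt (leq_trans _ h1) //= addn0.
pose BG := fun kq => nest b.+1 a.+2 kq (fun i kp => (kp + m' i)%N) (Bterm s j' z) (fun _ => 1).
have hBG : forall kq, BG kq = \sum_(1 <= k < (kq + j a.+1).+1) h k.
  move=> kq; rewrite /BG /= /m' ltnn eqxx; apply: eq_bigr => k _.
  rewrite /h hQf /Bterm /j' ltnn addn0.
  congr (_ * _).
  apply: (@nest_top R b a.+3 k k _ (fun _ kp => kp) _ (tQ s z) 1).
  - move=> _ /=; have -> : (a.+3 <= a.+1)%N = false by lia.
    have -> : (a.+3 == a.+2) = false by lia.
    by rewrite addn0.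
  - move=> i' k' /andP[h1 _].
    by rewrite leqNgt (ltn_trans _ h1) //= (gtn_eqF (ltn_trans _ h1)) // addn0.
  - move=> i' k' /andP[h1 _]; rewrite /Bterm /tQ.
    by rewrite leqNgt (leq_trans _ h1) //= addn0.
pose gK := fun K k => (z a.+2 ^+ k)^-1 / ((k + K)%:R ^ s a.+2) * Q (a + b.+1).+1 a.+3 (k + K) s z.
have hgK : forall K kq, z a.+2 ^ ((j a.+2)%:Z - K%:Z) * gK K kq = z a.+2 ^+ j a.+2 * h (kq + K)%N.
  move=> K kq; rewrite /gK /h /tQ exprzDr ?unitfE // -exprnN -exprnP exprD invfM.
  set zk := z a.+2 ^+ kq; set zj := z a.+2 ^+ j a.+2; set zK := z a.+2 ^+ K.
  by rewrite !mulrA [_ * zK^-1 * zk^-1]mulrAC.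
set zj := z a.+2 ^+ j a.+2.
set E := eps R (j a.+1) (j a.+2 + m a.+2)%N.
set lo := (minn (j a.+1) (j a.+2 + m a.+2)).+1.
set hi := (maxn (j a.+1) (j a.+2 + m a.+2)).+1.
set Qp := Q (a + b.+1).+1 a.+2 (j a.+2) s z.
have core : forall kq, LG kq = zj * BG kq - zj * Qp * 1 +
    E * \sum_(lo <= K < hi) z a.+2 ^ ((j a.+2)%:Z - K%:Z) * gK K kq.
  move=> kq; rewrite hLG hBG /Qp hQp.
  rewrite [X in E * X](eq_bigr (fun K => zj * h (kq + K)%N)); last by move=> K _; rewrite hgK.
  exact: core_id.
pose pre := fun G k => tj 1%N k * nest a 2 k bdm tj G.
have hL : forall k, Bterm s jp z 1 k * nest (a + b.+1) 2 k (fun i kp => (kp + mp i)%N) (Bterm s jp z) (fun _ => 1)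
    = pre LG k.
  move=> k; rewrite (@pre_eq R a b.+1 k s z mp jp m j) //.
  by move=> i hi2; rewrite /mp /jp (_ : (i <= a.+2)%N = true) //; lia.
have hB'e : forall k, Bterm s j' z 1 k * nest (a + b.+1) 2 k (fun i kp => (kp + m' i)%N) (Bterm s j' z) (fun _ => 1)
    = pre BG k.
  move=> k; rewrite (@pre_eq R a b.+1 k s z m' j' m j) //.
  by move=> i hi2; rewrite /m' /j' /= (_ : (i <= a.+1)%N = true) //; lia.
have zi2 : forall n', (n' <= a + b.+1)%N -> forall i, (2 <= i <= n'.+1)%N -> 1 <= `|z i|.
  by move=> n' hn i /andP[h1 h2]; apply: zi; lia.
have [aB' hB'] := @summable_B R (a + b.+1) s m' j' z (fun _ => 1) (fun _ => 1%N)
    z1 (zi2 _ (leqnn _)) (fun _ _ _ => leqnn _) (polyb_const 1) (fun k => ltac:(by rewrite normr1)).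
have eB' : B (a + b.+1).+1 s m' j' z = aB' by rewrite -(cser_hasSum hB').
have hB'' : hasSum (pre BG) aB' by apply: hasSum_ext hB'.
have [aBp hBp] := @summable_B R a s m j z (fun _ => 1) (fun _ => 1%N)
    z1 (zi2 _ (leq_addr _ _)) (fun _ _ _ => leqnn _) (polyb_const 1) (fun k => ltac:(by rewrite normr1)).
have eBp : B (a.+2).-1 s m j z = aBp by rewrite -(cser_hasSum hBp).
set S := \sum_(i < (a + b.+1).+2) `|s i|%N.
have hRR : forall K, hasSum (pre (gK K)) (RR (a + b.+1).+1 a.+2 s m j z K).
  move=> K.
  pose GK := fun k => ((k + K).+1 ^ `|s a.+2|%N * (((k + K + b * 0) * (k + K + b * 0).+1 ^ S) ^ b * 1))%N.
  have hGK : {homo GK : x y / (x <= y)%N}.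
    move=> x y hxy; rewrite /GK; apply: leq_mul; first by apply: leq_pow; lia.
    apply: leq_mul => //; apply: leq_pow; apply: leq_mul; first by lia.
    by apply: leq_pow; lia.
  have pGK : polyb GK.
    exists K, (`|s a.+2|%N + S.+1 * b)%N => k.
    rewrite /GK muln0 addn0 muln1 expnD expnM; apply: leq_mul; first by rewrite addnC.
    apply: leq_pow; rewrite expnS addnC; apply: leq_mul => //.
  have bGK : forall k, `|gK K k| <= (GK k)%:R.
    move=> k; rewrite /gK /GK normrM natrM; apply: ler_pM => //.
      by apply: term_bound.
    rewrite hQf.
    apply: (@nest_bound R b a.+3 (k + K) (fun _ kp => kp) (tQ s z) (fun _ => 1) 0 (fun x => x.+1 ^ S)%N (fun _ => 1%N)).
    - by move=> x y hxy; apply: leq_pow.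
    - by [].
    - by move=> i' k' _; rewrite addn0.
    - move=> i' k' /andP[h1 h2]; apply: le_trans (tQ_bound _ _ _) _.
        by apply: zi; lia.
      rewrite ler_nat; apply: leq_pexp2l => //.
      by apply: (@le_sum_ord (fun i => `|s i|%N)); lia.
    - by move=> k'; rewrite normr1.
  have [aK hK] := @summable_B R a s m j z (gK K) GK z1 (zi2 _ (leq_addr _ _)) hGK pGK bGK.
  have -> : RR (a + b.+1).+1 a.+2 s m j z K = aK by rewrite -(cser_hasSum hK).
  exact: hK.
have hsum := hasSumD (hasSumD (hasSumZ (c := zj) hB'') (hasSumZ (c := - (zj * Qp)) hBp))
   (hasSumZ (c := E) (hasSum_sum (r := index_iota lo hi)
        (fun K => hasSumZ (c := z a.+2 ^ ((j a.+2)%:Z - K%:Z)) (hRR K)))).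
have eL : B (a + b.+1).+1 s mp jp z = cser (pre LG).
  by rewrite /B /nestser; congr cser; apply: funext => k; rewrite hL.
rewrite eL eB' eBp.
rewrite -mulNr.
rewrite -(cser_hasSum hsum).
congr cser; apply: funext => k.
rewrite /pre (@nest_extg R a 2 k bdm tj LG (fun kq => zj * BG kq + (- (zj * Qp)) * 1 +
    E * \sum_(lo <= K < hi) z a.+2 ^ ((j a.+2)%:Z - K%:Z) * gK K kq)); last first.
  by move=> kq; rewrite core mulNr.
rewrite (nest_lin3 a 2 k bdm tj zj (- (zj * Qp)) E BG (fun _ => 1)).
rewrite !mulrDr; congr (_ + _ + _); first by rewrite mulrCA.
  by rewrite mulrCA.
rewrite mulrCA mulr_sumr; congr (_ * _).
by apply: eq_bigr => K _; rewrite mulrCA.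
Qed.

Unset Implicit Arguments.
Local Close Scope classical_set_scope.

Theorem mainTheorem6 (R : realType) (N : nat) (s : nat -> int) (z : nat -> R[i]) :
  (1 <= N)%N ->
  1 < `|z 1%N| ->
  (forall i, (1 <= i <= N)%N -> 1 <= `|z i|) ->
  (* (i) *)
  (forall (p : nat) (m j : nat -> nat),
     (2 <= N)%N -> (2 <= p <= N)%N -> m 1%N = 0%N ->
     let mp := fun i => if (i <= p)%N then m i
                        else if i == p.+1 then j p else 0%N in
     let jp := fun i => if (i <= p)%N then j i else 0%N in
     let m' := fun i => if (i <= p.-1)%N then m i
                        else if i == p then j p.-1 else 0%N in
     let j' := fun i => if (i <= p.-1)%N then j i else 0%N in
     B N s mp jp z =
       z p ^+ j p * B N s m' j' z
       - z p ^+ j p * Q N p (j p) s z * B p.-1 s m j z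
       + eps R (j p.-1) (j p + m p)%N *
           \sum_((minn (j p.-1) (j p + m p)).+1 <= k < (maxn (j p.-1) (j p + m p)).+1)
              z p ^ ((j p)%:Z - k%:Z) * RR N p s m j z k)
  /\
  (* (ii) *)
  (forall j1 : nat,
     B N s (fun i => if i == 2%N then j1 else 0%N)
           (fun i => if i == 1%N then j1 else 0%N) z =
       z 1%N ^+ j1 * La N s (fun i => (z i)^-1) - z 1%N ^+ j1 * Q N 1 j1 s z).
Proof.
Proof.
move=> N1 z1 zi; split.
- move=> p m j N2 /andP[p2 pN] m10 mp jp m' j'.
  have [a pa] : exists a, p = a.+2 by exists (p - 2)%N; lia.
  have [b Nb] : exists b, N = (a + b.+1).+1 by exists (N - a - 2)%N; lia.
  subst p N.
  exact (@parti R a b s z m j z1 zi).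
- move=> j1; case: N N1 zi => [|n] // _ zi.
  exact: partii.
Qed.
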